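(* Let $(\Lambda,d)$ be a $k$-graph. Let $(x;(m,n)),(y;(p,q))\in P_\Lambda$ with $p\not\le d(y)$ and $(x;n)\approx(y;p)$. Define $z=x(0,n\wedge d(x))\,\sigma^{p\wedge d(y)}y$. Then (i) $z\in\Lambda^{\le\infty}$; (ii) $m\wedge d(x)=m\wedge d(z)$ and $n\wedge d(x)=n\wedge d(z)$; (iii) $x(m\wedge d(x),n\wedge d(x))=z(m\wedge d(z),n\wedge d(z))$ and $y(p\wedge d(y),q\wedge d(y))=z(n\wedge d(z),(n+q-p)\wedge d(z))$.
   Context: A $k$-graph $(\Lambda,d)$ is a countable category with a degree functor $d:\Lambda\to\mathbb{N}^k$ satisfying unique factorization (if $d(\lambda)=m+n$ there are unique $\mu,\nu$ with $\lambda=\mu\nu$, $d(\mu)=m$, $d(\nu)=n$); $\Lambda^0$ vertices, $r,s$ range/source, $v\Lambda^n=\{\lambda:r(\lambda)=v,d(\lambda)=n\}$; $e_i$ standard basis, $\le$ coordinatewise, $\vee,\wedge$ coordinatewise max/min. For $m\in(\mathbb{N}\cup\{\infty\})^k$, $\Omega_{k,m}$ is the $k$-graph with objects $\{p\in\mathbb{N}^k:p\le m\}$, morphisms $(p,q)$ with $p\le q\le m$, $r(p,q)=p$, $s(p,q)=q$, $d(p,q)=q-p$. A graph morphism $x:\Omega_{k,m}\to\Lambda$ is a degree-preserving functor; $d(x)=m$, $x(a,b)=x((a,b))$, $x(a)=x(a,a)$. It is a boundary path if there is $n_x\in\mathbb{N}^k$, $n_x\le d(x)$, with $x(p)\Lambda^{e_i}=\emptyset$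 whenever $p\in\mathbb{N}^k$, $n_x\le p\le d(x)$, $p_i=d(x)_i$; $\Lambda^{\le\infty}$ is the set of boundary paths. For $p\in\mathbb{N}^k$, $p\le d(x)$, $\sigma^px(a,b)=x(a+p,b+p)$ on $\Omega_{k,d(x)-p}$. For $\lambda\in\Lambda$ with $s(\lambda)=x(0)$, $\lambda x:\Omega_{k,d(\lambda)+d(x)}\to\Lambda$ is the graph morphism with $(\lambda x)(0,d(\lambda))=\lambda$ and $(\lambda x)(0,p)=\lambda\,x(0,p-d(\lambda))$ for $d(\lambda)\le p\le d(\lambda)+d(x)$. Let $V_\Lambda=\{(x;m):x\in\Lambda^{\le\infty},m\in\mathbb{N}^k,m\not\le d(x)\}$ with $(x;m)\approx(y;p)$ iff $x(m\wedge d(x))=y(p\wedge d(y))$ and $m-m\wedge d(x)=p-p\wedge d(y)$. Let $P_\Lambda=\{(x;(m,n)):x\in\Lambda^{\le\infty},m,n\in\mathbb{N}^k,m\le n,n\not\le d(x)\}$. *)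

(* Defs.v *)
From Stdlib Require Import ClassicalEpsilon.
From mathcomp Require Import all_boot.

Set Implicit Arguments.
Unset Strict Implicit.
Unset Printing Implicit Defensive.

Definition nvec (k : nat) := 'I_k -> nat.
(* an element of (N u {oo})^k; None encodes oo *)
Definition evec (k : nat) := 'I_k -> option nat.

Definition vzero k : nvec k := fun _ => 0.
Arguments vzero k : clear implicits.
Definition vbasis k (i : 'I_k) : nvec k := fun j => nat_of_bool (j == i).
Definition vadd k (a b : nvec k) : nvec k := fun i => a i + b i.
(* used only when b <= a coordinatewise *)
Definition vsub k (a b : nvec k) : nvec k := fun i => a i - b i.
Definition vmin k (a b : nvec k) : nvec k := fun i => minn (a i) (b i).
Definition vmax k (a b : nvec k) : nvec k := fun i => maxn (a i) (b i).
Definition vle k (a b : nvec k) : Prop := forall i, a i <= b i.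

Definition ele k (p : nvec k) (m : evec k) : Prop :=
  forall i, match m i with Some mi => p i <= mi | None => true end.
Definition emin k (p : nvec k) (m : evec k) : nvec k :=
  fun i => match m i with Some mi => minn (p i) mi | None => p i end.
Definition esub k (m : evec k) (p : nvec k) : evec k :=
  fun i => option_map (fun mi => mi - p i) (m i).
Definition eadd k (a : nvec k) (m : evec k) : evec k :=
  fun i => option_map (fun mi => a i + mi) (m i).

(* A countable category (objects kV, morphisms kM, range r, source s,
   identities, composition comp f g = "f g" defined when s f = r g)
   with a degree functor d : Lambda -> N^k having unique factorisation. *)
Record kgraph (k : nat) := KGraph {
  kV : countType;
  kM : countType;
  krng : kM -> kV;
  ksrc : kM -> kV;
  kid : kV -> kM;
  kcomp : kM -> kM -> kM;
  kdeg : kM -> nvec k;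
  krng_id : forall v, krng (kid v) = v;
  ksrc_id : forall v, ksrc (kid v) = v;
  krng_comp : forall f g, ksrc f = krng g -> krng (kcomp f g) = krng f;
  ksrc_comp : forall f g, ksrc f = krng g -> ksrc (kcomp f g) = ksrc g;
  kcomp_idl : forall f, kcomp (kid (krng f)) f = f;
  kcomp_idr : forall f, kcomp f (kid (ksrc f)) = f;
  kcomp_assoc : forall f g h, ksrc f = krng g -> ksrc g = krng h ->
      kcomp f (kcomp g h) = kcomp (kcomp f g) h;
  kdeg_id : forall v, kdeg (kid v) = vzero k;
  kdeg_comp : forall f g, ksrc f = krng g ->
      kdeg (kcomp f g) = vadd (kdeg f) (kdeg g);
  kfactor : forall (l : kM) (m n : nvec k), kdeg l = vadd m n ->
      exists mu nu, [/\ ksrc mu = krng nu, l = kcomp mu nu,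
                        kdeg mu = m & kdeg nu = n] /\
        forall mu' nu', ksrc mu' = krng nu' -> l = kcomp mu' nu' ->
          kdeg mu' = m -> kdeg nu' = n -> mu' = mu /\ nu' = nu
}.

Arguments krng {k L} _ : rename.
Arguments ksrc {k L} _ : rename.
Arguments kid {k L} _ : rename.
Arguments kcomp {k L} _ _ : rename.
Arguments kdeg {k L} _ : rename.

Section KGraphDefs.
Variables (k : nat) (L : kgraph k).

(* The (unique, when m <= d(l)) factorisation l = mu nu with d(mu) = m. *)
Definition kfact (l : kM L) (m : nvec k) : kM L * kM L :=
  epsilon (inhabits (l, l))
    (fun pr => [/\ ksrc pr.1 = krng pr.2, kcomp pr.1 pr.2 = l,
                   kdeg pr.1 = m & kdeg pr.2 = vsub (kdeg l) m]).

(* A candidate graph morphism x : Omega_{k,m} -> Lambda : its degree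
   m = d(x) and its values x(a,b) (meaningful only for a <= b <= d(x)). *)
Record gpath := GPath { pdeg : evec k; pmor : nvec k -> nvec k -> kM L }.

Definition pvert (x : gpath) (a : nvec k) : kV L := krng (pmor x a a).

Definition is_graph_morphism (x : gpath) : Prop :=
  (forall a, ele a (pdeg x) -> pmor x a a = kid (pvert x a)) /\
  (forall a b, vle a b -> ele b (pdeg x) ->
     [/\ krng (pmor x a b) = pvert x a, ksrc (pmor x a b) = pvert x b
       & kdeg (pmor x a b) = vsub b a]) /\
  (forall a b c, vle a b -> vle b c -> ele c (pdeg x) ->
     pmor x a c = kcomp (pmor x a b) (pmor x b c)).

Definition boundary_path (x : gpath) : Prop :=
  is_graph_morphism x /\
  exists nx : nvec k, ele nx (pdeg x) /\
    forall p : nvec k, vle nx p -> ele p (pdeg x) ->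
      forall i : 'I_k, pdeg x i = Some (p i) ->
        ~ exists l : kM L, krng l = pvert x p /\ kdeg l = vbasis i.

Definition shift (x : gpath) (p : nvec k) : gpath :=
  GPath (esub (pdeg x) p) (fun a b => pmor x (vadd a p) (vadd b p)).

(* lambda x : the graph morphism with (lambda x)(0,d(lambda)) = lambda and
   (lambda x)(0,b) = lambda x(0, b - d(lambda)) for d(lambda) <= b; all
   other values are forced by unique factorisation:
   (lambda x)(0,b) is the initial segment of degree b of
   (lambda x)(0, b \/ d(lambda)), and (lambda x)(a,b) the final segment
   of (lambda x)(0,b) after degree a. *)
Definition concat (l : kM L) (x : gpath) : gpath :=
  GPath (eadd (kdeg l) (pdeg x))
    (fun a b =>
       let F := (kfact (kcomp l (pmor x (vzero k)
                          (vsub (vmax b (kdeg l)) (kdeg l)))) b).1 in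
       (kfact F a).2).

Definition approx (x : gpath) (m : nvec k) (y : gpath) (p : nvec k) : Prop :=
  pvert x (emin m (pdeg x)) = pvert y (emin p (pdeg y)) /\
  vsub m (emin m (pdeg x)) = vsub p (emin p (pdeg y)).

Definition inV (x : gpath) (m : nvec k) : Prop :=
  boundary_path x /\ ~ ele m (pdeg x).

Definition inP (x : gpath) (m n : nvec k) : Prop :=
  [/\ boundary_path x, vle m n & ~ ele n (pdeg x)].

End KGraphDefs.

(* Main.v *)
Require Import Defs.
From mathcomp Require Import all_boot.
From Stdlib Require Import ClassicalEpsilon FunctionalExtensionality.
From mathcomp Require Import zify.

Set Implicit Arguments.
Unset Strict Implicit.
Unset Printing Implicit Defensive.


Lemma vext k (a b : nvec k) : (forall i, a i = b i) -> a = b.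
Proof. move=> h; exact: functional_extensionality h. Qed.

Lemma kfact_spec k (L : kgraph k) (g : kM L) (a : nvec k) : vle a (kdeg g) ->
  [/\ ksrc (kfact g a).1 = krng (kfact g a).2, kcomp (kfact g a).1 (kfact g a).2 = g,
      kdeg (kfact g a).1 = a & kdeg (kfact g a).2 = vsub (kdeg g) a].
Proof.
move=> le; rewrite /kfact; apply epsilon_spec.
have e : kdeg g = vadd a (vsub (kdeg g) a).
  by apply: vext => i; rewrite /vadd /vsub; have := le i; lia.
have [mu [nu [[h1 h2 h3 h4] _]]] := kfactor e.
by exists (mu, nu); split.
Qed.

Lemma kfact_uniq k (L : kgraph k) (g mu nu : kM L) (a : nvec k) :
  ksrc mu = krng nu -> g = kcomp mu nu -> kdeg mu = a -> kfact g a = (mu, nu).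
Proof.
move=> s e d.
have dg : kdeg g = vadd (kdeg mu) (kdeg nu) by rewrite e kdeg_comp.
have le : vle a (kdeg g) by move=> i; rewrite dg /vadd -d; lia.
have e2 : kdeg g = vadd a (vsub (kdeg g) a).
  by apply: vext => i; rewrite /vadd /vsub; have := le i; lia.
have [mu0 [nu0 [_ U]]] := kfactor e2.
have [A B C D] := kfact_spec le.
have dnu : kdeg nu = vsub (kdeg g) a.
  by apply: vext => i; rewrite dg /vsub /vadd -d; lia.
have [-> ->] := U _ _ s e d dnu.
have [<- <-] := U _ _ A (esym B) C D.
by case: (kfact g a).
Qed.

Definition seg k (L : kgraph k) (g : kM L) (a b : nvec k) :=
  (kfact (kfact g b).1 a).2.

Lemma seg_char k (L : kgraph k) (g al s be : kM L) (a b : nvec k) :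
  ksrc al = krng s -> ksrc s = krng be -> g = kcomp al (kcomp s be) ->
  kdeg al = a -> kdeg (kcomp al s) = b -> seg g a b = s.
Proof.
move=> h1 h2 e da db.
have e' : g = kcomp (kcomp al s) be by rewrite e kcomp_assoc.
rewrite /seg (kfact_uniq _ e' db) ?ksrc_comp //=.
by rewrite (kfact_uniq h1 (erefl _) da).
Qed.

Lemma seg_ex k (L : kgraph k) (g : kM L) (a b : nvec k) :
  vle a b -> vle b (kdeg g) ->
  exists al be, [/\ ksrc al = krng (seg g a b), ksrc (seg g a b) = krng be,
     g = kcomp al (kcomp (seg g a b) be), kdeg al = a
     & kdeg (seg g a b) = vsub b a] /\ kdeg be = vsub (kdeg g) b.
Proof.
move=> ab bg.
have [A1 A2 A3 A4] := kfact_spec bg.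
have ab' : vle a (kdeg (kfact g b).1) by rewrite A3.
have [B1 B2 B3 B4] := kfact_spec ab'.
exists (kfact (kfact g b).1 a).1, (kfact g b).2; rewrite /seg; split; first split=> //.
- by rewrite -A1 -[in RHS]B2 ksrc_comp.
- by rewrite kcomp_assoc ?B2 ?A2 // -A1 -[in RHS]B2 ksrc_comp.
- by rewrite B4 A3.
- by [].
Qed.

Lemma seg_deg k (L : kgraph k) (g : kM L) (a b : nvec k) :
  vle a b -> vle b (kdeg g) -> kdeg (seg g a b) = vsub b a.
Proof. by move=> ab bg; have [al [be [[]]]] := seg_ex ab bg. Qed.

Lemma vaddsub k (a b : nvec k) : vle a b -> vadd a (vsub b a) = b.
Proof. by move=> h; apply: vext => i; rewrite /vadd /vsub; have := h i; lia. Qed.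

Lemma seg_ext k (L : kgraph k) (g h : kM L) (a b : nvec k) :
  ksrc g = krng h -> vle a b -> vle b (kdeg g) ->
  seg (kcomp g h) a b = seg g a b.
Proof.
move=> gh ab bg.
have [al [be [[h1 h2 e da ds] _]]] := seg_ex ab bg.
have sb : ksrc be = krng h by rewrite -gh e !ksrc_comp // krng_comp.
apply: (@seg_char _ _ _ al _ (kcomp be h)) => //.
- by rewrite krng_comp.
- rewrite {1}e -kcomp_assoc; try by rewrite ?krng_comp ?ksrc_comp.
  by rewrite -kcomp_assoc.
- by rewrite kdeg_comp // da ds vaddsub.
Qed.

Lemma vle_trans k (a b c : nvec k) : vle a b -> vle b c -> vle a c.
Proof. by move=> h1 h2 i; apply: leq_trans (h1 i) (h2 i). Qed.

Lemma seg_comp k (L : kgraph k) (g : kM L) (a b c : nvec k) :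
  vle a b -> vle b c -> vle c (kdeg g) ->
  ksrc (seg g a b) = krng (seg g b c) /\
  seg g a c = kcomp (seg g a b) (seg g b c).
Proof.
move=> ab bc cg.
have bg := vle_trans bc cg.
have [al [be [[h1 h2 e da ds] dbe]]] := seg_ex ab bg.
have cb : vle (vsub c b) (kdeg be).
  by move=> i; rewrite dbe /vsub; have := bc i; have := cg i; lia.
have [B1 B2 B3 B4] := kfact_spec cb.
set s := seg g a b in h1 h2 e ds *.
set b1 := (kfact be (vsub c b)).1 in B1 B2 B3 B4 *.
set b2 := (kfact be (vsub c b)).2 in B1 B2 B3 B4 *.
have sb1 : ksrc s = krng b1 by rewrite h2 -B2 krng_comp.
have E1 : seg g b c = b1.
  apply: (@seg_char _ _ _ (kcomp al s) _ b2) => //.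
  - by rewrite ksrc_comp.
  - by rewrite e B2 kcomp_assoc.
  - by rewrite kdeg_comp // da ds vaddsub.
  - by rewrite kdeg_comp ?ksrc_comp // kdeg_comp // da ds B3 !vaddsub // (vle_trans ab).
rewrite E1; split=> //.
apply: (@seg_char _ _ _ al _ b2) => //.
- by rewrite krng_comp.
- by rewrite ksrc_comp.
- by rewrite {1}e -B2 (kcomp_assoc (f:=s)) //.
- rewrite kdeg_comp ?krng_comp // kdeg_comp // da ds B3.
  by apply: vext => i; rewrite /vadd /vsub; have := ab i; have := bc i; lia.
Qed.

Lemma deg0_id k (L : kgraph k) (f : kM L) : kdeg f = vzero k -> f = kid (krng f).
Proof.
move=> d.
have e : kdeg f = vadd (vzero k) (vzero k) by rewrite d; apply: vext.
have [mu [nu [_ U]]] := kfactor e.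
have [-> _] := U (kid (krng f)) f (ksrc_id _) (esym (kcomp_idl f)) (kdeg_id _) d.
have [-> _] := U f (kid (ksrc f)) (esym (krng_id _)) (esym (kcomp_idr f)) d (kdeg_id _).
done.
Qed.

Lemma ele_le k (a b : nvec k) (m : evec k) : vle a b -> ele b m -> ele a m.
Proof.
move=> ab bm i; have := bm i; have := ab i.
by case: (m i) => // mi h1 h2; apply: leq_trans h1 h2.
Qed.

Lemma vle0 k (a : nvec k) : vle (vzero k) a.
Proof. by []. Qed.

Lemma vle_refl k (a : nvec k) : vle a a.
Proof. by move=> i. Qed.

Lemma vsub0 k (a : nvec k) : vsub a (vzero k) = a.
Proof. by apply: vext => i; rewrite /vsub /vzero subn0. Qed.

Lemma vsubaa k (a : nvec k) : vsub a a = vzero k.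
Proof. by apply: vext => i; rewrite /vsub /vzero subnn. Qed.

Lemma gm_all k (L : kgraph k) (w : gpath L) a b : is_graph_morphism w ->
  vle a b -> ele b (pdeg w) ->
  [/\ krng (pmor w a b) = pvert w a, ksrc (pmor w a b) = pvert w b
       & kdeg (pmor w a b) = vsub b a].
Proof. by case=> _ [h _]; apply: h. Qed.

Lemma gm_comp k (L : kgraph k) (w : gpath L) a b c : is_graph_morphism w ->
  vle a b -> vle b c -> ele c (pdeg w) ->
  pmor w a c = kcomp (pmor w a b) (pmor w b c).
Proof. by case=> _ [_ h]; apply: h. Qed.

Lemma gm_id k (L : kgraph k) (w : gpath L) a : is_graph_morphism w ->
  ele a (pdeg w) -> pmor w a a = kid (pvert w a).
Proof. by case=> h _; apply: h. Qed.

Definition GN k (L : kgraph k) (l : kM L) (w : gpath L) N :=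
  kcomp l (pmor w (vzero k) N).

Definition cN k (dl b : nvec k) := vsub (vmax b dl) dl.

Lemma cN_ele k (dl b : nvec k) (dw : evec k) :
  ele b (eadd dl dw) -> ele (cN dl b) dw.
Proof.
move=> h i; have := h i; rewrite /eadd /cN /vsub /vmax.
case: (dw i) => //= d; lia.
Qed.

Lemma cN_le k (dl a b : nvec k) : vle a b -> vle (vsub a dl) (cN dl b).
Proof. by move=> h i; have := h i; rewrite /cN /vsub /vmax; lia. Qed.

Lemma cN_ge k (dl a b : nvec k) : vle a b -> vle a (vadd dl (cN dl b)).
Proof. by move=> h i; have := h i; rewrite /vadd /cN /vsub /vmax; lia. Qed.

Lemma GN_deg k (L : kgraph k) (l : kM L) (w : gpath L) N :
  is_graph_morphism w -> ksrc l = pvert w (vzero k) -> ele N (pdeg w) ->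
  ksrc l = krng (pmor w (vzero k) N) /\ kdeg (GN l w N) = vadd (kdeg l) N.
Proof.
move=> hw hs hN; have [r s d] := gm_all hw (vle0 N) hN.
split; first by rewrite r.
by rewrite /GN kdeg_comp ?r // d vsub0.
Qed.

Lemma concat_seg k (L : kgraph k) (l : kM L) (w : gpath L) a b N :
  is_graph_morphism w -> ksrc l = pvert w (vzero k) ->
  vle a b -> ele b (pdeg (concat l w)) -> ele N (pdeg w) ->
  vle (vsub b (kdeg l)) N -> pmor (concat l w) a b = seg (GN l w N) a b.
Proof.
move=> hw hs ab hb hN hbN.
have -> : pmor (concat l w) a b = seg (GN l w (cN (kdeg l) b)) a b by [].
set c := cN (kdeg l) b.
have cN' : vle c N by move=> i; have := hbN i; rewrite /c /cN /vsub /vmax; lia.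
have hc : ele c (pdeg w) := ele_le cN' hN.
have [s1 d1] := GN_deg hw hs hc.
have [r2 s2 d2] := gm_all hw cN' hN.
have [r3 s3 d3] := gm_all hw (vle0 c) hc.
have e : GN l w N = kcomp (GN l w c) (pmor w c N).
  by rewrite /GN (gm_comp hw (vle0 c) cN' hN) kcomp_assoc // s3 r2.
rewrite e seg_ext //.
- by rewrite ksrc_comp // s3 r2.
- by rewrite d1; apply: cN_ge; apply: vle_refl.
Qed.

Lemma concat_gm k (L : kgraph k) (l : kM L) (w : gpath L) :
  is_graph_morphism w -> ksrc l = pvert w (vzero k) ->
  is_graph_morphism (concat l w).
Proof.
move=> hw hs.
have key : forall a b c, vle a b -> ele b (pdeg (concat l w)) ->
    vle b c -> ele c (pdeg (concat l w)) ->
    pmor (concat l w) a b = seg (GN l w (cN (kdeg l) c)) a b /\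
    vle b (kdeg (GN l w (cN (kdeg l) c))).
  move=> a b c ab hb bc hc.
  have hN := cN_ele hc.
  split; first by apply: concat_seg => //; apply: cN_le.
  by have [_ ->] := GN_deg hw hs hN; apply: cN_ge.
split; [|split].
- move=> a ha.
  have [e bd] := key a a a (vle_refl a) ha (vle_refl a) ha.
  rewrite /pvert {1}e; apply: deg0_id.
  by rewrite seg_deg ?vsubaa //; apply: vle_refl.
- move=> a b ab hb.
  have ha := ele_le ab hb.
  have [e1 bd] := key a b b ab hb (vle_refl b) hb.
  have [e2 _] := key a a b (vle_refl a) ha ab hb.
  have [e3 _] := key b b b (vle_refl b) hb (vle_refl b) hb.
  rewrite /pvert e1 e2 e3; split.
  + have [h1 ->] := seg_comp (vle_refl a) ab bd.
    by rewrite krng_comp.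
  + by have [-> _] := seg_comp ab (vle_refl b) bd.
  + by rewrite seg_deg.
- move=> a b c ab bc hc.
  have hb := ele_le bc hc.
  have [e1 bd] := key a c c (vle_trans ab bc) hc (vle_refl c) hc.
  have [e2 _] := key a b c ab hb bc hc.
  have [e3 _] := key b c c bc hc (vle_refl c) hc.
  by rewrite e1 e2 e3; have [_ ->] := seg_comp ab bc bd.
Qed.

Lemma concat_low k (L : kgraph k) (l : kM L) (w : gpath L) a b :
  is_graph_morphism w -> ksrc l = pvert w (vzero k) ->
  vle a b -> vle b (kdeg l) -> pmor (concat l w) a b = seg l a b.
Proof.
move=> hw hs ab bl.
have h0 : ele (vzero k) (pdeg w) by move=> i; case: (pdeg w i).
rewrite (@concat_seg _ _ _ _ _ _ (vzero k)) //.
- rewrite /GN gm_id // -hs kcomp_idr //.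
- move=> i /=; rewrite /eadd; have := bl i; case: (pdeg w i) => [d|] //=; lia.
- by move=> i; have := bl i; rewrite /vsub /vzero; lia.
Qed.

Lemma concat_high k (L : kgraph k) (l : kM L) (w : gpath L) a b :
  is_graph_morphism w -> ksrc l = pvert w (vzero k) ->
  vle a b -> ele b (pdeg w) ->
  pmor (concat l w) (vadd (kdeg l) a) (vadd (kdeg l) b) = pmor w a b.
Proof.
move=> hw hs ab hb.
have ha := ele_le ab hb.
rewrite (@concat_seg _ _ _ _ _ _ b) //.
- have [r1 s1 d1] := gm_all hw (vle0 a) ha.
  have [r2 s2 d2] := gm_all hw ab hb.
  have [r3 s3 d3] := gm_all hw (vle0 b) hb.
  apply: (@seg_char _ _ _ (kcomp l (pmor w (vzero k) a)) _ (kid (ksrc (pmor w a b)))).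
  + by rewrite ksrc_comp ?s1 ?r2 ?r1.
  + by rewrite krng_id.
  + rewrite kcomp_idr /GN (gm_comp hw (vle0 a) ab hb) kcomp_assoc //.
      by rewrite r1.
    by rewrite s1 r2.
  + by rewrite kdeg_comp ?r1 // d1 vsub0.
  + rewrite kdeg_comp; last by rewrite ksrc_comp ?s1 ?r2 ?r1.
    rewrite kdeg_comp ?r1 // d1 d2 vsub0.
    by apply: vext => i; rewrite /vadd /vsub; have := ab i; lia.
- by move=> i; rewrite /vadd; have := ab i; lia.
- move=> i /=; rewrite /eadd; have := hb i; case: (pdeg w i) => [d|] //=.
  by rewrite /vadd; lia.
- by move=> i; rewrite /vadd /vsub; lia.
Qed.

Definition en (o : option nat) (a : nat) :=
  match o with Some d => minn a d | None => a end.

Lemma pt (ox oy : option nat) (mi ni pi qi : nat) :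
  mi <= ni -> pi <= qi -> ni - en ox ni = pi - en oy pi ->
  let oz := option_map (fun d => en ox ni + d) (option_map (fun d => d - en oy pi) oy) in
  [/\ en ox mi = en oz mi, en ox ni = en oz ni &
      en oz (ni + qi - pi) = en ox ni + (en oy qi - en oy pi)].
Proof.
move=> h1 h2 h3 /=; case: ox h3 => [dx|]; case: oy => [dy|] /=; rewrite /en => h3; split; lia.
Qed.

Lemma vle_add k (a b c : nvec k) : vle a b -> vle (vadd a c) (vadd b c).
Proof. by move=> h i; have := h i; rewrite /vadd; lia. Qed.

Lemma ele_shift k (a p : nvec k) (d : evec k) :
  ele p d -> ele a (esub d p) -> ele (vadd a p) d.
Proof.
move=> hp ha i; have := hp i; have := ha i; rewrite /esub /vadd.
case: (d i) => //= e; lia.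
Qed.

Lemma shift_gm k (L : kgraph k) (y : gpath L) (p : nvec k) :
  is_graph_morphism y -> ele p (pdeg y) -> is_graph_morphism (shift y p).
Proof.
move=> gy hp; split; [|split].
- move=> a ha; rewrite /pvert /=; apply: gm_id => //; exact: ele_shift.
- move=> a b ab hb; rewrite /pvert /=.
  have [r s d] := gm_all gy (vle_add p ab) (ele_shift hp hb).
  split=> //; rewrite d; apply: vext => i; rewrite /vsub /vadd; lia.
- move=> a b c ab bc hc /=.
  by apply: gm_comp => //; [apply: vle_add | apply: vle_add | apply: ele_shift].
Qed.

Lemma emin_ele k (a : nvec k) (d : evec k) : ele (emin a d) d.
Proof. by move=> i; rewrite /emin; case: (d i) => //= e; lia. Qed.

Lemma vadd0 k (a : nvec k) : vadd (vzero k) a = a.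
Proof. by apply: vext => i; rewrite /vadd /vzero. Qed.

Unset Implicit Arguments.

Theorem proposition3p11 (k : nat) (L : kgraph k) (x y : gpath L)
    (m n p q : nvec k)
    (hx : inP x m n) (hy : inP y p q)
    (hp : ~ ele p (pdeg y))
    (happ : approx x n y p) :
  let z := concat (pmor x (vzero k) (emin n (pdeg x)))
                  (shift y (emin p (pdeg y))) in
  boundary_path z /\
  (emin m (pdeg x) = emin m (pdeg z) /\ emin n (pdeg x) = emin n (pdeg z)) /\
  (pmor x (emin m (pdeg x)) (emin n (pdeg x))
     = pmor z (emin m (pdeg z)) (emin n (pdeg z)) /\
   pmor y (emin p (pdeg y)) (emin q (pdeg y))
     = pmor z (emin n (pdeg z)) (emin (vsub (vadd n q) p) (pdeg z))).
Proof.
move=> z; subst z.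
case: hx => bx mn nx; case: hy => byy pq qy.
case: bx => gx _; case: byy => gy [ny [hny bny]].
case: happ => happ1 happ2.
have PT := fun i => @pt (pdeg x i) (pdeg y i) _ _ _ _ (mn i) (pq i)
  (congr1 (fun f => f i) happ2).
set n' := emin n (pdeg x) in happ1 happ2 PT *.
set p' := emin p (pdeg y) in happ1 happ2 PT *.
have en' : ele n' (pdeg x) by apply: emin_ele.
have ep' : ele p' (pdeg y) by apply: emin_ele.
have [r0 s0 d0] := gm_all gx (vle0 n') en'.
rewrite vsub0 in d0.
set lam := pmor x (vzero k) n' in r0 s0 d0 *.
set w := shift y p'.
have gw : is_graph_morphism w by apply: shift_gm.
have hw0 : pvert w (vzero k) = pvert y p' by rewrite /pvert /= vadd0.
have hs : ksrc lam = pvert w (vzero k) by rewrite s0 hw0.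
have gz := concat_gm gw hs.
have ez : pdeg (concat lam w) = eadd n' (esub (pdeg y) p') by rewrite /= d0.
have E1 : emin m (pdeg x) = emin m (pdeg (concat lam w)).
  by rewrite ez; apply: vext => i; have [A _ _] := PT i; exact: A.
have E2 : n' = emin n (pdeg (concat lam w)).
  by rewrite ez; apply: vext => i; have [_ A _] := PT i; exact: A.
split; [|split; [by split|split]].
-
  split=> //.
  exists (vadd n' (vsub ny p')); split.
    rewrite ez => i; rewrite /eadd /esub /vadd /vsub.
    have := hny i; case: (pdeg y i) => //= d; lia.
  move=> P hP hPz i hi [l' [rl dl]].
  rewrite ez in hPz hi.
  set s := vsub P n'.
  have eP : P = vadd (kdeg lam) s.
    by rewrite d0; apply: vext => i0; rewrite /vadd /s /vsub; have := hP i0; rewrite /vadd; lia.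
  have es : ele s (esub (pdeg y) p').
    move=> i0; have := hPz i0; have := ep' i0; rewrite /eadd /esub /s /vsub.
    case: (pdeg y i0) => //= d; lia.
  have pv : pvert (concat lam w) P = pvert y (vadd s p').
    by rewrite /pvert eP concat_high //; apply: vle_refl.
  apply: (bny (vadd s p') _ _ i).
  + move=> i0; have := hP i0; rewrite /vadd /s /vsub; lia.
  + exact: ele_shift.
  + move: hi; have := ep' i; rewrite /eadd /esub /vadd /s /vsub.
    case: (pdeg y i) => //= d h1 [h2]; congr Some; lia.
  + by exists l'; rewrite -pv.
- rewrite -E1 -E2 concat_low //.
  + have mn' : vle (emin m (pdeg x)) n'.
      by move=> i; have := mn i; rewrite /n' /emin; case: (pdeg x i) => //= d; lia.
    have [r1 s1 d1] := gm_all gx (vle0 _) (ele_le mn' en').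
    have [r2 s2 d2] := gm_all gx mn' en'.
symmetry.
    apply: (@seg_char _ _ _ (pmor x (vzero k) (emin m (pdeg x))) _
             (kid (ksrc (pmor x (emin m (pdeg x)) n')))).
    * by rewrite s1 r2.
    * by rewrite krng_id.
    * by rewrite kcomp_idr /lam (gm_comp gx (vle0 _) mn' en').
    * by rewrite d1 vsub0.
    * by rewrite kdeg_comp ?s1 ?r2 // d1 d2 vsub0 vaddsub.
  + by move=> i; have := mn i; rewrite /n' /emin; case: (pdeg x i) => //= d; lia.
  + by rewrite d0 => i.
- have E3 : emin n (pdeg (concat lam w)) = vadd (kdeg lam) (vzero k).
    by rewrite -E2 d0; apply: vext => i; rewrite /vadd /vzero addn0.
  set q' := emin q (pdeg y).
  have E4 : emin (vsub (vadd n q) p) (pdeg (concat lam w)) =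
            vadd (kdeg lam) (vsub q' p').
    by rewrite ez d0; apply: vext => i; have [_ _ A] := PT i; exact: A.
  have pq' : vle p' q'.
    by move=> i; have := pq i; rewrite /p' /q' /emin; case: (pdeg y i) => //= d; lia.
  have eq' : ele (vsub q' p') (esub (pdeg y) p').
    move=> i; have := emin_ele q (pdeg y) i; rewrite /esub /vsub -/q'.
    case: (pdeg y i) => //= d; lia.
  rewrite E3 E4 concat_high //= ?vadd0.
  + by rewrite (_ : vadd (vsub q' p') p' = q') //; apply: vext => i; rewrite /vadd /vsub; have := pq' i; lia.
Qed.
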